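(* For monomial ideals $J\subset I\subset S_f$, with $t$ a new variable, $\operatorname{sdepth}(I/J)[t]=\operatorname{sdepth}(I/J)[t,t^{-1}]=\operatorname{sdepth}(I/J)+1$. Consequently, for new variables $t_1,\ldots,t_r$, $\operatorname{sdepth}(I/J)[t_1^{\pm1},\ldots,t_r^{\pm1}]=\operatorname{sdepth}(I/J)+r$.
   Context: Let $K$ be a field, $S=K[x_1,\ldots,x_n]$, $A\subset\{1,\ldots,n\}$, $f=\prod_{j\in A}x_j$, and $S_f=K[x_1,\ldots,x_n,x_j^{-1}: j\in A]$. A monomial ideal of $S_f$ is an ideal generated by monomials $x_1^{a_1}\cdots x_n^{a_n}$ with $a_j\in\mathbb{Z}$ for $j\in A$ and $a_j\geq 0$ for $j\notin A$. For monomial ideals $J\subset I\subset S_f$, a Stanley space of $I/J$ is a free $K[Z]$-submodule $uK[Z]$ of $I/J$, where $u$ is a monomial in $I\setminus J$ and $Z\subset\{x_1,\ldots,x_n\}\cup\{x_j^{-1}: j\in A\}$ with $\{x_j,x_j^{-1}\}\not\subseteq Z$ for all $j\in A$; its dimension is $|Z|$. A Stanley decomposition of $I/J$ is a finite direct sum of Stanley spaces $I/J=\bigoplus_{i=1}^r u_iK[Z_i]$; its Stanley depth is $\min_i|Z_i|$, and $\operatorname{sdepth}(I/J)$ is the maximum of this over all Stanley decompositions. The same definitions are used for $(I/J)[t]$ and $(I/J)[t,t^{-1}]$, viewed as quotients of monomial ideals in the (localized) polynomial ring with the extra variable $t$ (resp. $t$ inverted), and likewise with several extra variables $t_1,\ldots,t_r$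 all inverted. *)

(* Defs.v *)
(* Combinatorial (multigraded) model of monomial ideals of
   S_f = K[x_v (v in V), x_j^{-1} (j in A)] and of Stanley decompositions. *)
From mathcomp Require Import all_boot all_order all_algebra.
Set Implicit Arguments. Unset Strict Implicit. Unset Printing Implicit Defensive.
Import Order.TTheory GRing.Theory Num.Theory.
Local Open Scope ring_scope.

Section StanleyDefs.
Variable V : finType.

(* Monomials are exponent vectors a : V -> int; a is a monomial of S_f
   iff a j >= 0 for every j not in A (the set of inverted variables). *)
Definition is_mono (A : {set V}) (a : V -> int) : Prop :=
  forall j, j \notin A -> 0 <= a j.

Definition mmul (a b : V -> int) : V -> int := fun j => a j + b j.

(* A monomial ideal of S_f, identified with its set of monomials
   (a set of monomials of S_f closed under multiplication by monomials of S_f).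
   The empty set is the zero ideal. *)
Definition is_monideal (A : {set V}) (I : (V -> int) -> Prop) : Prop :=
  (forall a, I a -> is_mono A a) /\
  (forall a b, I a -> is_mono A b -> I (mmul a b)).

(* A candidate Stanley space u K[Z]: Z is given by Zp (the variables x_j in Z)
   and Zn (the j such that x_j^{-1} is in Z). *)
Record sspace := SSpace { ss_u : V -> int; ss_Zp : {set V}; ss_Zn : {set V} }.

Definition ss_dim (s : sspace) : nat := (#|ss_Zp s| + #|ss_Zn s|)%N.

Definition inKZ (s : sspace) (e : V -> int) : Prop :=
  forall j, (j \in ss_Zp s -> 0 <= e j) /\ (j \in ss_Zn s -> e j <= 0) /\
            (j \notin ss_Zp s -> j \notin ss_Zn s -> e j = 0).

(* u K[Z] is a Stanley space of I/J: u in I \ J, Z admissible, and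
   u K[Z] is a free K[Z]-submodule of I/J, i.e. u*m in I \ J for every
   monomial m of K[Z]. *)
Definition is_sspace (A : {set V}) (I J : (V -> int) -> Prop) (s : sspace) :=
  [/\ I (ss_u s), ~ J (ss_u s), ss_Zn s \subset A, [disjoint ss_Zp s & ss_Zn s] &
      forall e, inKZ s e -> I (mmul (ss_u s) e) /\ ~ J (mmul (ss_u s) e)].

(* A Stanley decomposition I/J = (+)_i u_i K[Z_i]: a finite list of Stanley
   spaces whose monomial sets u_i Mon(Z_i) cover I \ J and are pairwise
   disjoint (as K-vector spaces spanned by monomials, this is exactly the
   direct-sum condition). *)
Definition is_sdec (A : {set V}) (I J : (V -> int) -> Prop) (D : seq sspace) :=
  [/\ forall i, (i < size D)%N -> is_sspace A I J (nth (SSpace (fun=> 0) set0 set0) D i),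
      forall m, I m -> ~ J m -> exists i e, [/\ (i < size D)%N,
          inKZ (nth (SSpace (fun=> 0) set0 set0) D i) e &
          m = mmul (ss_u (nth (SSpace (fun=> 0) set0 set0) D i)) e] &
      forall i k e e', (i < size D)%N -> (k < size D)%N ->
          inKZ (nth (SSpace (fun=> 0) set0 set0) D i) e ->
          inKZ (nth (SSpace (fun=> 0) set0 set0) D k) e' ->
          mmul (ss_u (nth (SSpace (fun=> 0) set0 set0) D i)) e =
          mmul (ss_u (nth (SSpace (fun=> 0) set0 set0) D k)) e' -> i = k].

Definition dec_sdepth (D : seq sspace) (d : nat) : Prop :=
  (exists i, (i < size D)%N /\ ss_dim (nth (SSpace (fun=> 0) set0 set0) D i) = d) /\
  (forall i, (i < size D)%N -> (d <= ss_dim (nth (SSpace (fun=> 0) set0 set0) D i))%N).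

Definition sdepth_is (A : {set V}) (I J : (V -> int) -> Prop) (d : nat) : Prop :=
  (exists D, is_sdec A I J D /\ dec_sdepth D d) /\
  (forall D d', is_sdec A I J D -> dec_sdepth D d' -> (d' <= d)%N).

End StanleyDefs.

(* Adjoining a new variable t (= None) to the variable set V. *)
(* (I/J)[t]: t not inverted; monomials of I S_f[t] are x^a t^k, a in I, k >= 0 *)
Definition A_poly (V : finType) (A : {set V}) : {set option V} := Some @: A.
Definition ext_poly (V : finType) (I : (V -> int) -> Prop) : (option V -> int) -> Prop :=
  fun m => I (fun j => m (Some j)) /\ 0 <= m None.
(* (I/J)[t, t^{-1}]: t inverted; monomials x^a t^k, a in I, k in Z *)
Definition A_laur (V : finType) (A : {set V}) : {set option V} := None |: Some @: A.
Definition ext_laur (V : finType) (I : (V -> int) -> Prop) : (option V -> int) -> Prop :=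
  fun m => I (fun j => m (Some j)).

(* Adjoining r new variables t_1..t_r (= inr i), all inverted. *)
Definition A_laurn (V : finType) (r : nat) (A : {set V}) : {set (V + 'I_r)%type} :=
  (inl @: A) :|: [set inr i | i : 'I_r].
Definition ext_laurn (V : finType) (r : nat) (I : (V -> int) -> Prop) :
  ((V + 'I_r)%type -> int) -> Prop :=
  fun m => I (fun j => m (inl j)).

Arguments A_laurn V r A : clear implicits.
Arguments ext_laurn V r I _ : clear implicits.

(* Main.v *)
Require Import Defs.
From mathcomp Require Import all_boot all_order all_algebra.
From mathcomp Require Import zify.
From Stdlib Require Import FunctionalExtensionality.
Set Implicit Arguments. Unset Strict Implicit. Unset Printing Implicit Defensive.
Import Order.TTheory GRing.Theory Num.Theory.
Local Open Scope ring_scope.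

Definition dfl (V : finType) : sspace V := SSpace (fun=> 0) set0 set0.

Definition sdecF (V : finType) (A : {set V}) (I J : (V -> int) -> Prop) n (F : nat -> sspace V) :=
  [/\ forall i, (i < n)%N -> is_sspace A I J (F i),
      forall m, I m -> ~ J m -> exists i e, [/\ (i < n)%N, inKZ (F i) e & m = mmul (ss_u (F i)) e] &
      forall i k e e', (i < n)%N -> (k < n)%N -> inKZ (F i) e -> inKZ (F k) e' ->
         mmul (ss_u (F i)) e = mmul (ss_u (F k)) e' -> i = k].

Definition depthF (V : finType) n (F : nat -> sspace V) d :=
  (exists i, (i < n)%N /\ ss_dim (F i) = d) /\ (forall i, (i < n)%N -> (d <= ss_dim (F i))%N).

Definition achF (V : finType) (A : {set V}) (I J : (V -> int) -> Prop) d :=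
  exists n F, @sdecF V A I J n F /\ depthF n F d.

Lemma sdecF_ext (V : finType) (A : {set V}) I J n (F G : nat -> sspace V) :
  (forall i, (i < n)%N -> F i = G i) -> sdecF A I J n F -> sdecF A I J n G.
Proof.
move=> FG [h1 h2 h3]; split.
- by move=> i hi; rewrite -FG //; apply: h1.
- move=> m hI hJ; have [i [e [hi he hm]]] := h2 m hI hJ.
  by exists i, e; rewrite -FG.
- move=> i k e e' hi hk; rewrite -!FG //; exact: h3.
Qed.

Lemma depthF_ext (V : finType) n (F G : nat -> sspace V) d :
  (forall i, (i < n)%N -> F i = G i) -> depthF n F d -> depthF n G d.
Proof.
move=> FG [[i [hi hd]] h]; split.
- by exists i; rewrite -FG.
- by move=> k hk; rewrite -FG //; apply: h.
Qed.

Lemma sdepth_achF (V : finType) (A : {set V}) I J d :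
  sdepth_is A I J d <-> achF A I J d /\ (forall d', achF A I J d' -> (d' <= d)%N).
Proof.
have E : forall d0, (exists D, is_sdec A I J D /\ dec_sdepth D d0) <-> achF A I J d0.
  move=> d0; split.
  - by move=> [D [h1 h2]]; exists (size D), (nth (dfl V) D).
  - move=> [n [F [h1 h2]]]; exists (mkseq F n).
    have FG : forall i, (i < n)%N -> F i = nth (dfl V) (mkseq F n) i.
      by move=> i hi; rewrite nth_mkseq.
    have := sdecF_ext FG h1; have := depthF_ext FG h2.
    by rewrite /is_sdec /dec_sdepth size_mkseq.
split.
- move=> [h1 h2]; split; first by apply/E.
  move=> d' /E [D [hD hd]]; exact: h2 hD hd.
- move=> [h1 h2]; split; first by apply/E.
  move=> D d' hD hd; apply: h2; apply/E; exists D; done.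
Qed.

Lemma depth_exists (V : finType) n (F : nat -> sspace V) : (0 < n)%N -> exists d, depthF n F d.
Proof.
move=> n0.
have ex : exists d, [exists i : 'I_n, ss_dim (F i) == d].
  by exists (ss_dim (F 0%N)); apply/existsP; exists (Ordinal n0).
case: (ex_minnP ex) => d /existsP [i /eqP hi] hmin.
exists d; split; first by exists i; split.
move=> k hk; apply: hmin; apply/existsP; exists (Ordinal hk); done.
Qed.
Definition Nset (V W : finType) (inj : V -> W) : {set W} := ~: (inj @: [set: V]).

Definition extf (V W : finType) (inj : V -> W) (f : V -> int) (g : W -> int) : W -> int :=
  fun w => if [pick v | inj v == w] is Some v then f v else g w.

Lemma extf_inj (V W : finType) (inj : V -> W) f g v :
  injective inj -> extf inj f g (inj v) = f v.
Proof.
move=> hinj; rewrite /extf; case: pickP => [v' /eqP /hinj -> //|/(_ v)].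
by rewrite eqxx.
Qed.

Lemma Nset_inj (V W : finType) (inj : V -> W) v : (inj v \in Nset inj) = false.
Proof. by rewrite in_setC imset_f ?inE. Qed.

Lemma extf_N (V W : finType) (inj : V -> W) f g w :
  w \in Nset inj -> extf inj f g w = g w.
Proof.
move=> hw; rewrite /extf; case: pickP => [v /eqP Hv|//].
by rewrite -Hv Nset_inj in hw.
Qed.

Lemma Nset_case (V W : finType) (inj : V -> W) w :
  w \in Nset inj \/ exists v, w = inj v.
Proof.
case hw: (w \in Nset inj); first by left.
right; move: hw; rewrite in_setC => /negbFE /imsetP [v _ ->]; by exists v.
Qed.

Lemma memZ_inj (V W : finType) (inj : V -> W) (X : {set V}) (Y : {set W}) v :
  injective inj -> Y \subset Nset inj -> (inj v \in inj @: X :|: Y) = (v \in X).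
Proof.
move=> hinj hY; rewrite in_setU mem_imset //.
case hv: (inj v \in Y); last by rewrite orbF.
by have := subsetP hY _ hv; rewrite Nset_inj.
Qed.

Lemma memZ_N (V W : finType) (inj : V -> W) (X : {set V}) (Y : {set W}) w :
  w \in Nset inj -> (w \in inj @: X :|: Y) = (w \in Y).
Proof.
move=> hw; rewrite in_setU; case: (Nset_case inj w) => [_|[v hv]].
- case hx: (w \in inj @: X) => //=.
  by move: hx => /imsetP [v _ hv]; rewrite hv Nset_inj in hw.
- by rewrite hv Nset_inj in hw.
Qed.

Definition liftS (V W : finType) (inj : V -> W) (s : sspace V) (P : {set W}) : sspace W :=
  SSpace (extf inj (ss_u s) (fun w => if w \in P then -1 else 0))
         (inj @: ss_Zp s :|: (Nset inj :\: P)) (inj @: ss_Zn s :|: P).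

Lemma inKZ_lift (V W : finType) (inj : V -> W) (s : sspace V) (P : {set W}) e :
  injective inj -> P \subset Nset inj ->
  inKZ (liftS inj s P) e <->
  inKZ s (fun v => e (inj v)) /\
  (forall w, w \in Nset inj -> (w \in P -> e w <= 0) /\ (w \notin P -> 0 <= e w)).
Proof.
move=> hinj hP.
have hP' : Nset inj :\: P \subset Nset inj by apply: subsetDl.
split.
- move=> H; split.
  + move=> v; have := H (inj v); rewrite /= !memZ_inj //.
  + move=> w hw; have := H w; rewrite /= !memZ_N // in_setD hw andbT.
    case: (w \in P) => [[_ [h _]]|[h _]]; split=> //; exact: h.
- move=> [H1 H2] j; case: (Nset_case inj j) => [hj|[v ->]].
  + rewrite /= !memZ_N // in_setD hj andbT; have [h1 h2] := H2 j hj.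
    case: (j \in P) h1 h2 => h1 h2 /=; split; try done; by [move=> _; apply: h1|move=> _; apply: h2].
  + rewrite /= !memZ_inj //; exact: H1.
Qed.

Lemma dim_lift (V W : finType) (inj : V -> W) (s : sspace V) (P : {set W}) :
  injective inj -> P \subset Nset inj ->
  ss_dim (liftS inj s P) = (ss_dim s + #|Nset inj|)%N.
Proof.
move=> hinj hP.
have hP' : Nset inj :\: P \subset Nset inj by apply: subsetDl.
have cU : forall (X : {set V}) (Y : {set W}), Y \subset Nset inj ->
    #|inj @: X :|: Y| = (#|X| + #|Y|)%N.
  move=> X Y hY; have := cardsUI (inj @: X) Y.
  have -> : inj @: X :&: Y = set0.
    apply/setP => w; rewrite in_setI in_set0.
    case hw: (w \in inj @: X) => //=; move: hw => /imsetP [v _ ->].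
    by apply/negP => /(subsetP hY); rewrite Nset_inj.
  by rewrite cards0 addn0 card_imset.
rewrite /ss_dim /= !cU //.
have := cardsID P (Nset inj); rewrite (setIidPr hP) => <-.
lia.
Qed.
Record setting (V W : finType) (inj : V -> W) (A : {set V}) (Aext Npos : {set W})
  (I J : (V -> int) -> Prop) (Iext Jext : (W -> int) -> Prop) : Prop := Setting {
  st_inj : injective inj;
  st_A : forall v, (inj v \in Aext) = (v \in A);
  st_AN : forall w, w \in Nset inj -> (w \in Aext) = (w \notin Npos);
  st_Np : Npos \subset Nset inj;
  st_I : forall m, Iext m <-> I (fun v => m (inj v)) /\ (forall w, w \in Npos -> 0 <= m w);
  st_J : forall m, Jext m <-> J (fun v => m (inj v)) /\ (forall w, w \in Npos -> 0 <= m w) }.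

Lemma extf_comp (V W : finType) (inj : V -> W) f g :
  injective inj -> (fun v => extf inj f g (inj v)) = f.
Proof. by move=> hinj; apply: functional_extensionality => v; rewrite extf_inj. Qed.

Lemma lift_sspace V W inj A Aext Npos I J Iext Jext (s : sspace V) (P : {set W}) :
  @setting V W inj A Aext Npos I J Iext Jext ->
  is_sspace A I J s -> P \subset Nset inj :\: Npos ->
  is_sspace Aext Iext Jext (liftS inj s P).
Proof.
move=> [hinj hA hAN hNp hI hJ] [s1 s2 s3 s4 s5] hP.
have hPN : P \subset Nset inj by apply: subset_trans hP (subsetDl _ _).
have hP' : Nset inj :\: P \subset Nset inj by apply: subsetDl.
have hPnp : forall w, w \in Npos -> w \notin P.
  move=> w hw; apply/negP => /(subsetP hP); rewrite in_setD hw //.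
have hNpN : forall w, w \in Npos -> w \in Nset inj by move=> w /(subsetP hNp).
split.
- apply/hI; rewrite /liftS /= extf_comp //; split => // w hw.
  by rewrite extf_N ?hNpN // (negbTE (hPnp w hw)).
- by move=> /hJ [] /=; rewrite extf_comp.
- apply/subsetP => w; rewrite /= in_setU => /orP [/imsetP [v hv ->]|hw].
  + by rewrite hA; apply: (subsetP s3).
  + have := subsetP hP _ hw; rewrite in_setD => /andP [h1 h2].
    by rewrite hAN.
- rewrite -setI_eq0; apply/eqP/setP => w; rewrite in_setI in_set0 /=.
  case: (Nset_case inj w) => [hw|[v ->]].
  + by rewrite !memZ_N // in_setD; case: (w \in P); rewrite ?andbF.
  + rewrite !memZ_inj //; case h1: (v \in ss_Zp s) => //=.
    by rewrite (disjointFr s4 h1).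
- move=> e /(inKZ_lift _ _ hinj hPN) [he1 he2].
  have [h1 h2] := s5 _ he1.
  have E : (fun v => mmul (ss_u (liftS inj s P)) e (inj v)) = mmul (ss_u s) (fun v => e (inj v)).
    by apply: functional_extensionality => v; rewrite /mmul /= extf_inj.
  split.
  + apply/hI; rewrite E; split => // w hw.
    rewrite /mmul /= extf_N ?hNpN // (negbTE (hPnp w hw)) add0r.
    by have [_ ] := he2 w (hNpN w hw); apply; apply: hPnp.
  + by move=> /hJ [] ; rewrite E.
Qed.
Lemma lift_ach V W inj A Aext Npos I J Iext Jext n (F : nat -> sspace V) d :
  @setting V W inj A Aext Npos I J Iext Jext ->
  sdecF A I J n F -> depthF n F d -> achF Aext Iext Jext (d + #|Nset inj|)%N.
Proof.
move=> S [c1 c2 c3] [[i0 [hi0 hd0]] hdF].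
have [hinj hA hAN hNp hI hJ] := S.
set Ps := enum (powerset (Nset inj :\: Npos)).
set m := size Ps.
have hm : (0 < m)%N.
  have : set0 \in Ps by rewrite mem_enum powersetE; apply: sub0set.
  rewrite -index_mem; exact: leq_ltn_trans (leq0n _).
have hPs : forall j, (j < m)%N -> nth set0 Ps j \subset Nset inj :\: Npos.
  by move=> j hj; have := mem_nth set0 hj; rewrite mem_enum powersetE.
have hPsN : forall j, (j < m)%N -> nth set0 Ps j \subset Nset inj.
  by move=> j hj; apply: subset_trans (hPs j hj) (subsetDl _ _).
set G := fun k => liftS inj (F (divn k m)) (nth set0 Ps (modn k m)).
have hkn : forall k, (k < n * m)%N -> (divn k m < n)%N by move=> k hk; rewrite ltn_divLR.
have hkm : forall k, (modn k m < m)%N by move=> k; rewrite ltn_pmod.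
exists (n * m)%N, G; split; first split.
- move=> k hk; apply: (lift_sspace S); [exact: c1 (hkn k hk)|exact: hPs].
- move=> x hx hnx; have [hx1 hx2] := (hI x).1 hx.
  have hnJ : ~ J (fun v => x (inj v)) by move=> hj; apply: hnx; apply/hJ.
  have [i [e [hi he hxe]]] := c2 _ hx1 hnJ.
  set P := [set w in Nset inj | x w < 0].
  have hPin : P \in Ps.
    rewrite mem_enum powersetE; apply/subsetP => w; rewrite inE => /andP [hw hxw].
    rewrite in_setD hw andbT; apply/negP => hnp.
    by have := hx2 w hnp; rewrite leNgt hxw.
  set j := index P Ps.
  have hj : (j < m)%N by rewrite index_mem.
  have hk1 : (divn (i * m + j) m = i)%N by rewrite divnMDl // divn_small // addn0.
  have hk2 : (modn (i * m + j) m = j)%N by rewrite modnMDl modn_small.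
  have hPN : P \subset Nset inj by apply/subsetP => w; rewrite inE => /andP [].
  exists (i * m + j)%N, (extf inj e (fun w => x w - (if w \in P then -1 else 0))).
  rewrite /G hk1 hk2 nth_index //; split.
  + rewrite -ltn_divLR // hk1 //.
  + apply/inKZ_lift => //; split; first by rewrite extf_comp.
    move=> w hw; rewrite extf_N // inE hw /=.
    case hxw : (x w < 0) => /=; split => // _.
    * lia.
    * by rewrite subr0 leNgt hxw.
  + apply: functional_extensionality => w; case: (Nset_case inj w) => [hw|[v ->]].
    * by rewrite /mmul /= !extf_N // addrC subrK.
    * by rewrite /mmul /= !extf_inj //; have := congr1 (fun f => f v) hxe.
- move=> k1 k2 e1 e2 hk1 hk2.
  move=> /(inKZ_lift _ _ hinj (hPsN _ (hkm k1))) [he1 he1'].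
  move=> /(inKZ_lift _ _ hinj (hPsN _ (hkm k2))) [he2 he2'] heq.
  have hi : (divn k1 m = divn k2 m)%N.
    apply: (c3 _ _ _ _ (hkn _ hk1) (hkn _ hk2) he1 he2).
    apply: functional_extensionality => v; have := congr1 (fun f => f (inj v)) heq.
    by rewrite /mmul /= !extf_inj.
  have hP : nth set0 Ps (modn k1 m) = nth set0 Ps (modn k2 m).
    apply/setP => w; case: (Nset_case inj w) => [hw|[v ->]].
    + have := congr1 (fun f => f w) heq; rewrite /mmul /= !extf_N //.
      have [a1 b1] := he1' w hw; have [a2 b2] := he2' w hw.
      case: (w \in nth set0 Ps (modn k1 m)) a1 b1; case: (w \in nth set0 Ps (modn k2 m)) a2 b2 => //= a2 b2 a1 b1.
      1,2: move=> h; exfalso; first [have := b1 isT; have := a2 isT; lia | have := a1 isT; have := b2 isT; lia].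
    + case h1 : (inj v \in nth set0 Ps (modn k1 m)).
        by have := subsetP (hPsN _ (hkm k1)) _ h1; rewrite Nset_inj.
      case h2 : (inj v \in nth set0 Ps (modn k2 m)) => //.
      by have := subsetP (hPsN _ (hkm k2)) _ h2; rewrite Nset_inj.
  have hj : (modn k1 m = modn k2 m)%N.
    by apply/eqP; rewrite -(nth_uniq set0 (hkm k1) (hkm k2) (enum_uniq _)) hP.
  by rewrite (divn_eq k1 m) (divn_eq k2 m) hi hj.
- split.
  + exists (i0 * m)%N; split; first by rewrite ltn_pmul2r.
    by rewrite /G mulnK // modnMl dim_lift // ?hd0 //; apply: hPsN.
  + move=> k hk; rewrite /G dim_lift //; last exact: hPsN.
    by rewrite leq_add2r; apply: hdF; apply: hkn.
Qed.
Definition meets (V W : finType) (inj : V -> W) (s : sspace W) : bool :=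
  [forall w, (w \in Nset inj) ==> ((ss_u s w == 0) || ((0 < ss_u s w) && (w \in ss_Zn s))
                                  || ((ss_u s w < 0) && (w \in ss_Zp s)))].

Definition resS (V W : finType) (inj : V -> W) (s : sspace W) : sspace V :=
  SSpace (fun v => ss_u s (inj v)) (inj @^-1: ss_Zp s) (inj @^-1: ss_Zn s).

Lemma res_inKZ (V W : finType) (inj : V -> W) (s : sspace W) e :
  inKZ s e -> inKZ (resS inj s) (fun v => e (inj v)).
Proof. by move=> H v; rewrite /= !inE; apply: H. Qed.

Lemma lift_inKZ0 (V W : finType) (inj : V -> W) (s : sspace W) e :
  injective inj -> inKZ (resS inj s) e -> inKZ s (extf inj e (fun=> 0)).
Proof.
move=> hinj H w; case: (Nset_case inj w) => [hw|[v ->]].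
- by rewrite extf_N.
- by rewrite extf_inj //; have := H v; rewrite /= !inE.
Qed.

Lemma lift_inKZm (V W : finType) (inj : V -> W) (s : sspace W) e :
  injective inj -> meets inj s -> [disjoint ss_Zp s & ss_Zn s] ->
  inKZ (resS inj s) e -> inKZ s (extf inj e (fun w => - ss_u s w)).
Proof.
move=> hinj /forallP hm hd H w; case: (Nset_case inj w) => [hw|[v ->]].
- rewrite extf_N //; have := implyP (hm w) hw.
  case hp : (w \in ss_Zp s); case hn : (w \in ss_Zn s).
  + by rewrite (disjointFr hd hp) in hn.
  + rewrite ?andbF ?andbT ?orbF => /orP [/eqP ->|h]; first by rewrite oppr0; do !split.
    by split => // _; rewrite oppr_ge0 ltW.
  + rewrite ?andbF ?andbT ?orbF => /orP [/eqP ->|h]; first by rewrite oppr0; do !split.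
    by split => //; split => // _; rewrite oppr_le0 ltW.
  + by rewrite !andbF !orbF => /eqP ->; rewrite oppr0.
- by rewrite extf_inj //; have := H v; rewrite /= !inE.
Qed.

Lemma res_sspace V W inj A Aext Npos I J Iext Jext (s : sspace W) :
  @setting V W inj A Aext Npos I J Iext Jext ->
  is_sspace Aext Iext Jext s -> is_sspace A I J (resS inj s).
Proof.
move=> [hinj hA hAN hNp hI hJ] [s1 s2 s3 s4 s5].
have [i1 i2] := (hI _).1 s1.
split.
- by [].
- by move=> hj; apply: s2; apply/hJ.
- by apply/subsetP => v; rewrite /= inE => /(subsetP s3); rewrite hA.
- rewrite -setI_eq0; apply/eqP/setP => v; rewrite /= !inE.
  by case h1 : (inj v \in ss_Zp s) => //=; rewrite (disjointFr s4 h1).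
- move=> e he; have [h1 h2] := s5 _ (lift_inKZ0 hinj he).
  have E : (fun v => mmul (ss_u s) (extf inj e (fun=> 0)) (inj v)) = mmul (ss_u (resS inj s)) e.
    by apply: functional_extensionality => v; rewrite /mmul /= extf_inj.
  have [h3 h4] := (hI _).1 h1.
  split; first by rewrite -E.
  by move=> hj; apply: h2; apply/hJ; rewrite E.
Qed.

Lemma dim_res (V W : finType) (inj : V -> W) (s : sspace W) :
  injective inj -> [disjoint ss_Zp s & ss_Zn s] ->
  (ss_dim s <= ss_dim (resS inj s) + #|Nset inj|)%N.
Proof.
move=> hinj hd.
set R := inj @: [set: V].
have c : forall X : {set W}, #|X| = (#|inj @^-1: X| + #|X :\: R|)%N.
  move=> X; rewrite -(cardsID R X); congr (_ + _)%N.
  have E : inj @: (inj @^-1: X) = X :&: R.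
    apply/setP => w; rewrite in_setI.
  apply/imsetP/andP => [[v hv ->]|[h1 /imsetP [v _ hv]]].
  + by rewrite inE in hv; split => //; apply: imset_f.
  + by exists v; rewrite // inE -hv.
  by rewrite -E card_imset.
rewrite /ss_dim /= (c (ss_Zp s)) (c (ss_Zn s)).
have : (#|ss_Zp s :\: R| + #|ss_Zn s :\: R| <= #|Nset inj|)%N.
  rewrite -cardsUI.
  have -> : (ss_Zp s :\: R) :&: (ss_Zn s :\: R) = set0.
    apply/setP => w; rewrite !inE.
    by case h1 : (w \in ss_Zp s); rewrite ?andbF //= (disjointFr hd h1) !andbF.
  rewrite cards0 addn0; apply: subset_leq_card; apply/subsetP => w.
  by rewrite !inE => /orP [] /andP [].
lia.
Qed.
Lemma restrict_ach V W inj A Aext Npos I J Iext Jext n (F : nat -> sspace W) e :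
  @setting V W inj A Aext Npos I J Iext Jext ->
  sdecF Aext Iext Jext n F -> depthF n F e ->
  exists d'', achF A I J d'' /\ (e <= d'' + #|Nset inj|)%N.
Proof.
move=> S [c1 c2 c3] [[i0 [hi0 he0]] heF].
have [hinj hA hAN hNp hI hJ] := S.
set idx := [seq i <- iota 0 n | meets inj (F i)].
set n' := size idx.
set G := fun j => resS inj (F (nth 0%N idx j)).
have hidx : forall j, (j < n')%N -> (nth 0%N idx j < n)%N /\ meets inj (F (nth 0%N idx j)).
  move=> j hj; have := mem_nth 0%N hj; rewrite mem_filter mem_iota add0n.
  by move=> /andP [hm /andP [_ hl]].
have huniq : uniq idx by apply: filter_uniq; apply: iota_uniq.
have cover : forall x, I x -> ~ J x ->
    exists j e, [/\ (j < n')%N, inKZ (G j) e & x = mmul (ss_u (G j)) e].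
  move=> x hx hnx.
  set x0 := extf inj x (fun=> 0).
  have hx0 : Iext x0.
    apply/hI; rewrite /x0 extf_comp //; split => // w hw.
    by rewrite extf_N //; apply: (subsetP hNp).
  have hnx0 : ~ Jext x0 by move=> /hJ []; rewrite /x0 extf_comp.
  have [i [e' [hi he' hxe]]] := c2 _ hx0 hnx0.
  have hmi : meets inj (F i).
    apply/forallP => w; apply/implyP => hw.
    have := congr1 (fun f => f w) hxe; rewrite /mmul /= /x0 extf_N // => h0.
    have := he' w; have [_ _ _ s4 _] := c1 i hi.
    case hp : (w \in ss_Zp (F i)); case hn : (w \in ss_Zn (F i)).
    - by rewrite (disjointFr s4 hp) in hn.
    - move=> [h1 _]; have := h1 isT; rewrite ?andbT ?andbF ?orbF; lia.
    - move=> [_ [h1 _]]; have := h1 isT; rewrite ?andbT ?andbF ?orbF; lia.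
    - move=> [_ [_ h1]]; have := h1 isT isT; rewrite ?andbT ?andbF ?orbF; lia.
  have hii : i \in idx by rewrite mem_filter hmi mem_iota add0n hi.
  exists (index i idx), (fun v => e' (inj v)); rewrite /G nth_index //; split.
  + by rewrite index_mem.
  + exact: res_inKZ.
  + apply: functional_extensionality => v; have := congr1 (fun f => f (inj v)) hxe.
    by rewrite /mmul /x0 /= extf_inj.
have sdec : sdecF A I J n' G.
  split.
  - move=> j hj; apply: (res_sspace S); apply: c1; exact: (hidx j hj).1.
  - exact: cover.
  - move=> j1 j2 e1 e2 hj1 hj2 he1 he2 heq.
    have [hn1 hm1] := hidx _ hj1; have [hn2 hm2] := hidx _ hj2.
    have [_ _ _ d1 _] := c1 _ hn1; have [_ _ _ d2 _] := c1 _ hn2.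
    have k := c3 _ _ _ _ hn1 hn2 (lift_inKZm hinj hm1 d1 he1) (lift_inKZm hinj hm2 d2 he2).
    have : nth 0%N idx j1 = nth 0%N idx j2.
      apply: k; apply: functional_extensionality => w; case: (Nset_case inj w) => [hw|[v ->]].
      + by rewrite /mmul !extf_N // !addrN.
      + by rewrite /mmul !extf_inj //; have := congr1 (fun f => f v) heq.
    by move/eqP; rewrite nth_uniq // => /eqP.
have [s1 s2 _ _ _] := c1 _ hi0.
have [h1 h2] := (hI _).1 s1.
have hnJ : ~ J (fun v => ss_u (F i0) (inj v)) by move=> hj; apply: s2; apply/hJ.
have [j [_ [hj _ _]]] := cover _ h1 hnJ.
have [d'' hd''] := depth_exists G (leq_ltn_trans (leq0n _) hj).
exists d''; split; first by exists n', G.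
have [[j' [hj' hdj']] _] := hd''.
rewrite -hdj'; apply: leq_trans (heF _ (hidx j' hj').1) _.
have [_ _ _ d1 _] := c1 _ (hidx j' hj').1.
exact: dim_res.
Qed.
Lemma generic V W inj A Aext Npos I J Iext Jext d :
  @setting V W inj A Aext Npos I J Iext Jext ->
  (sdepth_is Aext Iext Jext d <->
   exists d', d = (d' + #|Nset inj|)%N /\ sdepth_is A I J d').
Proof.
move=> S.
have L : forall d0, achF A I J d0 -> achF Aext Iext Jext (d0 + #|Nset inj|)%N.
  by move=> d0 [n [F [h1 h2]]]; apply: (lift_ach S h1 h2).
have R : forall e, achF Aext Iext Jext e ->
    exists d'', achF A I J d'' /\ (e <= d'' + #|Nset inj|)%N.
  by move=> e [n [F [h1 h2]]]; apply: (restrict_ach S h1 h2).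
rewrite sdepth_achF; split.
- move=> [ha hmax]; have [d'' [ha' hle]] := R _ ha.
  have hge := hmax _ (L _ ha').
  exists d''; split; first by apply/eqP; rewrite eqn_leq hle hge.
  apply/sdepth_achF; split => // d0 h0.
  by have := hmax _ (L _ h0); lia.
- move=> [d' [-> /sdepth_achF [ha hmax]]]; split; first exact: L.
  move=> e he; have [d'' [ha' hle]] := R _ he.
  by have := hmax _ ha'; lia.
Qed.
Lemma Nset_Some (V : finType) : Nset (@Some V) = [set None].
Proof.
apply/setP => -[v|]; first by rewrite Nset_inj in_set1.
rewrite in_set1 eqxx in_setC; apply/negP => /imsetP [x _] //.
Qed.

Lemma None_notin (V : finType) (A : {set V}) : (None \in Some @: A) = false.
Proof. by apply/negP => /imsetP [x _]. Qed.

Lemma setting_poly (V : finType) (A : {set V}) I J :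
  setting (@Some V) A (A_poly A) [set None] I J (ext_poly I) (ext_poly J).
Proof.
split.
- exact: Some_inj.
- by move=> v; rewrite /A_poly mem_imset //; apply: Some_inj.
- move=> w; rewrite Nset_Some in_set1 => /eqP ->; by rewrite /A_poly None_notin eqxx.
- by rewrite Nset_Some.
- move=> m; rewrite /ext_poly; split => [[h1 h2]|[h1 h2]]; split => //.
  + by move=> w; rewrite in_set1 => /eqP ->.
  + by apply: h2; rewrite in_set1.
- move=> m; rewrite /ext_poly; split => [[h1 h2]|[h1 h2]]; split => //.
  + by move=> w; rewrite in_set1 => /eqP ->.
  + by apply: h2; rewrite in_set1.
Qed.

Lemma setting_laur (V : finType) (A : {set V}) I J :
  setting (@Some V) A (A_laur A) set0 I J (ext_laur I) (ext_laur J).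
Proof.
split.
- exact: Some_inj.
- by move=> v; rewrite /A_laur in_setU1 /= mem_imset //; apply: Some_inj.
- by move=> w; rewrite Nset_Some in_set1 => /eqP ->; rewrite /A_laur in_setU1 eqxx in_set0.
- exact: sub0set.
- by move=> m; rewrite /ext_laur; split => [h|[h _]] //; split => // w; rewrite in_set0.
- by move=> m; rewrite /ext_laur; split => [h|[h _]] //; split => // w; rewrite in_set0.
Qed.

Lemma Nset_inl (V : finType) (r : nat) : Nset (@inl V 'I_r) = [set inr i | i : 'I_r].
Proof.
apply/setP => -[v|i]; first by rewrite Nset_inj; apply/esym/negP => /imsetP [x _].
rewrite in_setC imset_f // ?inE //; apply/negP => /imsetP [x _] //.
Qed.

Lemma inr_inj' (V : finType) (r : nat) : injective (@inr V 'I_r).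
Proof. by move=> x y []. Qed.

Lemma inl_inj' (V : finType) (r : nat) : injective (@inl V 'I_r).
Proof. by move=> x y []. Qed.

Lemma setting_laurn (V : finType) (r : nat) (A : {set V}) I J :
  setting (@inl V 'I_r) A (A_laurn V r A) set0 I J (ext_laurn V r I) (ext_laurn V r J).
Proof.
split.
- exact: inl_inj'.
- move=> v; rewrite /A_laurn in_setU mem_imset; last exact: inl_inj'.
  case: (v \in A) => //=; apply/negP => /imsetP [x _] //.
- by move=> w; rewrite Nset_inl /A_laurn in_setU in_set0 => ->; rewrite orbT.
- exact: sub0set.
- by move=> m; rewrite /ext_laurn; split => [h|[h _]] //; split => // w; rewrite in_set0.
- by move=> m; rewrite /ext_laurn; split => [h|[h _]] //; split => // w; rewrite in_set0.
Qed.

Theorem theorem4p1 (V : finType) (A : {set V}) (I J : (V -> int) -> Prop) (r : nat) :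
  is_monideal A I -> is_monideal A J -> (forall a, J a -> I a) ->
  forall d : nat,
    (sdepth_is (A_poly A) (ext_poly I) (ext_poly J) d <->
       (exists d', d = d'.+1 /\ sdepth_is A I J d')) /\
    (sdepth_is (A_laur A) (ext_laur I) (ext_laur J) d <->
       (exists d', d = d'.+1 /\ sdepth_is A I J d')) /\
    (sdepth_is (A_laurn V r A) (ext_laurn V r I) (ext_laurn V r J) d <->
       (exists d', d = (d' + r)%N /\ sdepth_is A I J d')).
Proof.
move=> _ _ _ d.
have cN : #|Nset (@Some V)| = 1%N by rewrite Nset_Some cards1.
have cNr : #|Nset (@inl V 'I_r)| = r by rewrite Nset_inl card_imset ?card_ord //; exact: inr_inj'.
split; last split.
- rewrite (generic _ (setting_poly A I J)) cN.
  by split => -[d' [-> h]]; exists d'; rewrite addn1.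
- rewrite (generic _ (setting_laur A I J)) cN.
  by split => -[d' [-> h]]; exists d'; rewrite addn1.
- by rewrite (generic _ (setting_laurn r A I J)) cNr.
Qed.
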